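(* Let $\mathcal L$ be an algebraic system, $\mathbf{STop}\mathcal{L}$ the category of semitopological $\mathcal L$-structures, and $\mathcal C$ an epireflective subcategory of $\mathbf{Top}$. Then $\mathrm{r}_{\mathcal C}(\mathbf{STop}\mathcal{L})\subseteq\mathbf{STop}\mathcal{L}$: for each $(\mathfrak U,X)\in\mathbf{STop}\mathcal{L}$, where $X$ is the domain of $\mathfrak U$, the space $\mathrm{r}_{\mathcal C}X$ is the domain of an $\mathcal L$-structure $\mathfrak V$ with $(\mathfrak V,\mathrm{r}_{\mathcal C}X)\in\mathbf{STop}\mathcal{L}$. Furthermore, the reflection arrow $\mathrm{r}_{(X,\mathcal C)}\colon X\to\mathrm{r}_{\mathcal C}X$ is an $\mathcal L$-homomorphism in $\mathbf{STop}\mathcal{L}$.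
   Context: An epireflective subcategory $\mathcal C$ of $\mathbf{Top}$ is a full, isomorphism-closed subcategory closed under products and subspaces; each space $X$ has a reflection $\mathrm{r}_{\mathcal C}X\in\mathcal C$ with a continuous surjection $\mathrm{r}_{(X,\mathcal C)}\colon X\to \mathrm{r}_{\mathcal C}X$ through which every continuous map from $X$ into a space of $\mathcal C$ factors uniquely. An algebraic system $\mathcal L$ consists of constant symbols, function symbols of finite arity $\ge1$ and a set of equations; an $\mathcal L$-structure is a set with interpretations of the constants and operations satisfying the equations; a semitopological $\mathcal L$-structure is one on a topological space in which all operations are separately continuous (continuous in each variable with the others fixed); $\mathcal L$-homomorphisms are continuous maps preserving constants and operations. *)

(* Defs.v *)
From HB Require Import structures.
From mathcomp Require Import all_boot all_order all_algebra.
From mathcomp Require Import all_classical all_reals all_analysis.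

Set Implicit Arguments.
Unset Strict Implicit.
Unset Printing Implicit Defensive.

Local Open Scope classical_set_scope.

Inductive term (K F : Type) (ar : F -> nat) : Type :=
  | tVar : nat -> term K ar
  | tConst : K -> term K ar
  | tApp : forall f : F, ('I_(ar f) -> term K ar) -> term K ar.

Record alg_system := AlgSystem {
  const_sym : Type;
  fun_sym : Type;
  arity : fun_sym -> nat;
  arity_pos : forall f, (0 < arity f)%N;
  eqn_idx : Type;
  eqn_lhs : eqn_idx -> term const_sym arity;
  eqn_rhs : eqn_idx -> term const_sym arity
}.

Record L_ops (L : alg_system) (A : Type) := LOps {
  op_const : const_sym L -> A;
  op_fun : forall f : fun_sym L, ('I_(arity f) -> A) -> A
}.
Arguments op_fun {L A} _ f _.
Arguments op_const {L A} _ _.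
Arguments tApp {K F ar} f _.

Fixpoint term_eval (L : alg_system) (A : Type) (I : L_ops L A)
    (v : nat -> A) (t : term (const_sym L) (@arity L)) : A :=
  match t with
  | tVar n => v n
  | tConst c => op_const I c
  | tApp f args => op_fun I f (fun j => term_eval I v (args j))
  end.

Definition is_L_structure (L : alg_system) (A : Type) (I : L_ops L A) : Prop :=
  forall (e : eqn_idx L) (v : nat -> A),
    term_eval I v (eqn_lhs e) = term_eval I v (eqn_rhs e).

Definition upd (n : nat) (A : Type) (a : 'I_n -> A) (i : 'I_n) (x : A) :
  'I_n -> A := fun j => if j == i then x else a j.

Definition semitop_L_structure (L : alg_system) (X : topologicalType)
    (I : L_ops L X) : Prop :=
  is_L_structure I /\
  forall (f : fun_sym L) (i : 'I_(arity f)) (a : 'I_(arity f) -> X),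
    continuous (fun x : X => op_fun I f (upd a i x)).

Definition L_hom (L : alg_system) (X Y : topologicalType)
    (I : L_ops L X) (J : L_ops L Y) (h : X -> Y) : Prop :=
  continuous h /\
  (forall c, h (op_const I c) = op_const J c) /\
  (forall f (a : 'I_(arity f) -> X), h (op_fun I f a) = op_fun J f (h \o a)).

Definition homeomorphic (X Y : topologicalType) : Prop :=
  exists (f : X -> Y) (g : Y -> X),
    [/\ continuous f, continuous g, cancel f g & cancel g f].

(** A full subcategory is given by a class [C] of spaces; it is
    epireflective when it is isomorphism-closed and closed under
    (arbitrary) products and subspaces. *)
Definition epireflective (C : topologicalType -> Prop) : Prop :=
  [/\ (forall X Y : topologicalType, C X -> homeomorphic X Y -> C Y),
      (forall (I : Type) (T : I -> topologicalType),
          (forall i, C (T i)) -> C (prod_topology T))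
    & (forall (X : topologicalType) (A : set X), C X -> C (set_type A))].

Definition is_reflection (C : topologicalType -> Prop)
    (X Y : topologicalType) (r : X -> Y) : Prop :=
  [/\ C Y, continuous r, (forall y : Y, exists x : X, r x = y)
    & forall (Z : topologicalType), C Z -> forall g : X -> Z, continuous g ->
        exists h : Y -> Z, [/\ continuous h, g = h \o r &
          forall h' : Y -> Z, continuous h' -> g = h' \o r -> h' = h]].

(* Main.v *)
Require Import Defs.
From HB Require Import structures.
From mathcomp Require Import all_boot all_order all_algebra.
From mathcomp Require Import all_classical all_reals all_analysis.

Set Implicit Arguments.
Unset Strict Implicit.
Unset Printing Implicit Defensive.

Section Aux.
Variables (L : alg_system) (X rX : topologicalType) (C : topologicalType -> Prop).
Variables (U : L_ops L X) (r : X -> rX).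
Hypothesis hU : semitop_L_structure U.
Hypothesis hr : is_reflection C r.

Lemma sep_cont f (a : 'I_(arity f) -> X) i :
  continuous (fun x => r (op_fun U f (upd a i x))).
Proof.
case: hr => _ rc _ _; case: hU => _ hs.
move=> x; exact: (continuous_comp (hs f i a x) (rc _)).
Qed.

Lemma factor f (a : 'I_(arity f) -> X) i :
  exists h : rX -> rX, continuous h /\
    forall x, r (op_fun U f (upd a i x)) = h (r x).
Proof.
case: hr => CY _ _ hfac.
have [h [hc he _]] := hfac rX CY _ (@sep_cont f a i).
exists h; split => // x.
by rewrite [LHS](congr1 (fun g => g x) he).
Qed.

Lemma one_coord f (a : 'I_(arity f) -> X) i x x' :
  r x = r x' -> r (op_fun U f (upd a i x)) = r (op_fun U f (upd a i x')).
Proof.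
move=> e; have [h [_ he]] := @factor f a i.
by rewrite !he e.
Qed.

Lemma all_coord f (a a' : 'I_(arity f) -> X) :
  (forall j, r (a j) = r (a' j)) -> r (op_fun U f a) = r (op_fun U f a').
Proof.
move=> E.
pose m k := fun j : 'I_(arity f) => if (j < k)%N then a' j else a j.
have key : forall k, r (op_fun U f (m k)) = r (op_fun U f a).
  elim=> [|k IH].
    by congr (r (op_fun U f _)); apply: funext => j; rewrite /m ltn0.
  case: (ltnP k (arity f)) => hk.
    pose i := Ordinal hk.
    have e1 : m k.+1 = upd (m k) i (a' i).
      apply: funext => j; rewrite /m /upd ltnS leq_eqVlt.
      case: (eqVneq j i) => [->|ne] //=; first by rewrite eqxx.
      suff -> : (nat_of_ord j == k) = false by [].
      by apply/negbTE; apply: contra ne => /eqP ej; apply/eqP/val_inj.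
    have e2 : m k = upd (m k) i (a i).
      apply: funext => j; rewrite /m /upd.
      case: (eqVneq j i) => [->|ne] //=; by rewrite ltnn.
    by rewrite e1 -IH [in RHS]e2; apply: one_coord; rewrite E.
  rewrite -IH; congr (r (op_fun U f _)); apply: funext => j; rewrite /m.
  have h1 : (j < k)%N by apply: leq_trans (ltn_ord j) hk.
  by rewrite h1 ltnS ltnW.
rewrite -(key (arity f)); congr (r (op_fun U f _)); apply: funext => j.
by rewrite /m ltn_ord.
Qed.

End Aux.

Theorem proposition3p9 (L : alg_system) (C : topologicalType -> Prop)
  (hC : epireflective C) (X : topologicalType) (U : L_ops L X)
  (hU : semitop_L_structure U) (rX : topologicalType) (r : X -> rX)
  (hr : is_reflection C r) :
  exists V : L_ops L rX, semitop_L_structure V /\ L_hom U V r.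
Proof.
have hr' := hr; case: hr' => CY rc rs _.
have [s hs] := choice rs.
pose V := LOps (fun c => r (op_const U c))
  (fun f (b : 'I_(arity f) -> rX) => r (op_fun U f (s \o b))).
have hom : forall f (a : 'I_(arity f) -> X),
    r (op_fun U f a) = op_fun V f (r \o a).
  move=> f a /=; apply: (all_coord hU hr) => j /=; by rewrite hs.
have tev : forall (w : nat -> X) t,
    r (term_eval U w t) = term_eval V (r \o w) t.
  move=> w; elim=> [n|c|f args IH] //=.
  rewrite hom; congr (op_fun V f _); apply: funext => j /=; exact: IH.
exists V; split; last first.
  split => //; split => // c.
split.
  move=> e v; have := hU.1 e (s \o v).
  move=> E; have -> : v = r \o (s \o v) by apply: funext => y /=; rewrite hs.
  by rewrite -!tev E.
move=> f i b /=.
have [h [hc he]] := @factor L X rX C U r hU hr f (s \o b) i.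
have E : (fun x => r (op_fun U f (s \o upd b i x))) = h.
  apply: funext => y; rewrite -{2}(hs y) -he.
  congr (r (op_fun U f _)); apply: funext => j /=; rewrite /upd.
  by case: (j == i).
by rewrite E.
Qed.
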